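(* Let $\mathcal{M}$ be a separable metric space, $f:\mathcal{M}\to\mathcal{M}$ a continuous bijection with continuous inverse, $\mathcal{X}\subseteq\mathcal{M}$ forward invariant under $f$, $\mathcal{Z}$ a separable metric space, $g:\mathcal{Z}\to\mathcal{Z}$ a continuous bijection with continuous inverse, and $F:\mathcal{X}\to\mathcal{Z}$ continuous with $F\circ f=g\circ F$ on $\mathcal{X}$. For $\xi\in\mathcal{X}$, if $\alpha_{\mathcal{X}}(\xi)$ is nonempty, then $F(\alpha_{\mathcal{X}}(\xi))\subseteq\alpha_{\mathcal{Z}}(F(\xi))$. Furthermore, if the trajectory through $\xi$ is backward precompact in $\mathcal{X}$, then $F(\alpha_{\mathcal{X}}(\xi))=\alpha_{\mathcal{Z}}(F(\xi))$.
   Context: $\alpha_{\mathcal{X}}(\xi)$ is the set of $x\in\mathcal{X}$ such that $f^{-k_j}(\xi)\to x$ for some indices $k_j\to\infty$, where $f^{-k}$ is the $k$-th iterate of $f^{-1}$; $\alpha_{\mathcal{Z}}(\zeta)$ is the set of $z\in\mathcal{Z}$ with $g^{-k_j}(\zeta)\to z$ for some $k_j\to\infty$. The trajectory through $\xi$ is backward precompact in $\mathcal{X}$ if the closure in $\mathcal{X}$ of $\{f^{-k}(\xi)\mid k\in\mathbb{N}\}$ is compact.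
   Formalization: Both parts also assume that the backward trajectory of ξ stays in 𝒳, that is, $f^{-k}(\xi)\in\mathcal{X}$ for every k ∈ ℕ. The paper assumes this as well. *)

(* Defs.v *)
From HB Require Import structures.
From mathcomp Require Import all_boot all_order all_algebra.
From mathcomp Require Import all_classical all_reals all_analysis.
Set Implicit Arguments. Unset Strict Implicit. Unset Printing Implicit Defensive.
Import Order.TTheory GRing.Theory Num.Theory.
Local Open Scope classical_set_scope.

Definition separable_space (T : topologicalType) : Prop :=
  exists D : set T, countable D /\ dense D.

Definition homeo_with_inv (T : topologicalType) (f finv : T -> T) : Prop :=
  cancel f finv /\ cancel finv f /\ continuous f /\ continuous finv.

Definition alpha_limit (T : topologicalType) (finv : T -> T) (A : set T) (xi : T)
  : set T :=
  [set x | A x /\ exists k : nat -> nat,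
      (forall N : nat, \forall j \near \oo, (N <= k j)%N) /\
      (fun j => iter (k j) finv xi) @ \oo --> x].

(* The trajectory through xi is backward precompact in A: the closure in A
   (i.e. closure `&` A, the subspace closure) of the backward orbit is compact. *)
Definition backward_precompact (T : topologicalType) (finv : T -> T) (A : set T)
  (xi : T) : Prop :=
  compact (closure (range (fun k : nat => iter k finv xi)) `&` A).

(* Main.v *)
Require Import Defs.
From HB Require Import structures.
From mathcomp Require Import all_boot all_order all_algebra.
From mathcomp Require Import all_classical all_reals all_analysis.
Import Order.TTheory GRing.Theory Num.Theory.
Local Open Scope classical_set_scope.
Set Implicit Arguments.

Lemma seq_within (T U : topologicalType) (X : set T) (F : T -> U) (u : nat -> T) x :
  {within X, continuous F} -> X x -> (forall n, X (u n)) ->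
  u @ \oo --> x -> (F \o u) @ \oo --> F x.
Proof.
move=> /subspace_continuousP cF Xx Xu ux.
apply: cvg_trans (cF x Xx).
have : u @ \oo --> within X (nbhs x).
  move=> P /= HP; have := ux _ HP; case=> N _ hN; exists N => // m Nm; exact: hN m Nm (Xu m).
move=> uw; exact: (cvg_app F uw).
Qed.

Lemma iter_conj (M Z : Type) (X : set M) (f finv : M -> M) (g ginv : Z -> Z) (F : M -> Z) xi :
  cancel finv f -> cancel g ginv ->
  (forall x, X x -> F (f x) = g (F x)) -> (forall k, X (iter k finv xi)) ->
  forall k, iter k ginv (F xi) = F (iter k finv xi).
Proof.
move=> fK gK hF hX; elim=> [//|k IH].
rewrite !iterS IH -[in LHS](fK (iter k finv xi)) -iterS hF //.
Qed.

Lemma ge_infty (j : nat -> nat) : (forall n, (n <= j n)%N) -> j @ \oo --> \oo.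
Proof.
move=> hj P [N _ HN]; exists N => // n /= Nn; apply: HN => /=.
exact: leq_trans Nn (hj n).
Qed.

Theorem corollary25 (R : realType) (M Z : metricType R)
  (f finv : M -> M) (g ginv : Z -> Z) (X : set M) (F : M -> Z) (xi : M) :
  separable_space M -> separable_space Z ->
  homeo_with_inv f finv -> homeo_with_inv g ginv ->
  f @` X `<=` X ->
  {within X, continuous F} ->
  (forall x, X x -> F (f x) = g (F x)) ->
  X xi ->
  (forall k : nat, X (iter k finv xi)) ->
  (alpha_limit finv X xi !=set0 ->
     F @` alpha_limit finv X xi `<=` alpha_limit ginv setT (F xi)) /\
  (backward_precompact finv X xi ->
     F @` alpha_limit finv X xi = alpha_limit ginv setT (F xi)).
Proof.
move=> _ _ [fK [finvK _]] [gK _] _ cF hF Xxi hX.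
have conj := @iter_conj _ _ X f finv g ginv F xi finvK gK hF hX.
have P1 : F @` alpha_limit finv X xi `<=` alpha_limit ginv setT (F xi).
  move=> _ [x [Xx [k [ku kx]]] <-]; split => //; exists k; split => //.
  under eq_fun do rewrite conj.
  exact: (@seq_within _ _ X F (fun j => iter (k j) finv xi) x cF Xx (fun n => hX (k n)) kx).
split => // hK; apply/seteqP; split => // z [_ [k [ku kz]]].
pose y j := iter (k j) finv xi.
have FK : (y @ \oo) (closure (range (fun k : nat => iter k finv xi)) `&` X).
  exists 0%N => // j _; split; last exact: hX.
  by apply: subset_closure; exists (k j).
have [x [Kx clx]] := hK (y @ \oo) _ FK.
have hj : forall n, exists j, (n <= j)%N /\ ball x (n.+1%:R^-1) (y j).
  move=> n.
  have Ay : (y @ \oo) (y @` [set j | (n <= j)%N]).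
    by exists n => // j /= nj; exists j.
  have := clx _ _ Ay (nbhsx_ballx x (n.+1%:R^-1 : R) _).
  case => [|p [[j nj <-] bp]]; first by rewrite invr_gt0 ltr0n.
  by exists j.
have [jn hjn] := choice hj.
have jinf : jn @ \oo --> \oo := @ge_infty jn (fun n => proj1 (hjn n)).
have yx : (y \o jn) @ \oo --> x.
  apply/cvg_ballP => e e0.
  have := near_infty_natSinv_lt (PosNum e0).
  apply: filterS => n /= hn.
  apply: (le_ball (ltW hn)); exact: (proj2 (hjn n)).
have Fz : (F \o (y \o jn)) @ \oo --> z.
  have E : (fun j => iter (k j) ginv (F xi)) \o jn = F \o (y \o jn).
    by apply: funext => n /=; rewrite conj.
  rewrite -E; exact: cvg_comp jinf kz.
have Fx : (F \o (y \o jn)) @ \oo --> F x.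
  exact: (@seq_within _ _ X F (y \o jn) x cF (proj2 Kx) (fun n => hX _) yx).
have zx : z = F x.
  exact: (@cvg_unique Z (@metric_hausdorff R Z) _ _ z (F x) Fz Fx).
exists x => //; split; first exact: (proj2 Kx).
exists (k \o jn); split => //.
move=> N; exact: jinf _ (ku N).
Qed.
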